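(* Let $(q,E)$ be an annotated CQ with $E=(E^+,E^-)$. Then a CQ $q'$ is a $\preceq^{\mathrm{cod}}$-repair for $(q,E)$ if and only if one of the following holds: (a) $q'$ is a $\preceq^{\mathrm{cod}}$-repair for $(q,(E^+,\emptyset))$ and $q'$ fits $(\emptyset,E^-)$; or (b) $q'$ is a $\preceq^{\mathrm{cod}}$-repair for $(q,(\emptyset,\widehat{E^-}))$ and $q'$ fits $(E^+,\emptyset)$, where $\widehat{E^-}=\{e\times\prod_{e'\in E^+}e'\mid e\in E^-\}$ if $E^+\neq\emptyset$, and $\widehat{E^-}=E^-$ otherwise.
   Context: Data examples of arity $k$ are pairs $(I,\mathbf a)$ with $I$ a finite instance and $\mathbf a$ a $k$-tuple of its values. A $k$-ary CQ is $q(x_1,\dots,x_k)\text{ :- }\alpha_1,\dots,\alpha_n$ (relational atoms, no constants, each answer variable in some atom). $[\![q]\!]$ is the set of data examples $(I,\mathbf a)$ with $\mathbf a\in q(I)$. $E=(E^+,E^-)$ is a pair of sets of data examples (positive, negative); $q$ fits $E$ iff $E^+\subseteq[\![q]\!]$ and $E^-\cap[\![q]\!]=\emptyset$. Direct product of instances: $I\times J$ has a fact $R(\langle a_1,b_1\rangle,\dots,\langle a_n,b_n\rangle)$ for each pair of facts $R(a_1,\dots,a_n)\in I$, $R(b_1,\dots,b_n)\in J$; for data examples $(I,(a_1,\dots,a_k))\times(J,(b_1,\dots,b_k))=(I\times J,(\langle a_1,b_1\rangle,\dots,\langle a_k,b_k\rangle))$; $\prod$ denotes the iterated product. $q_1\preceq^{\mathrm{cod}}_q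 q_2$ iff $[\![q]\!]\oplus[\![q_1]\!]\subseteq[\![q]\!]\oplus[\![q_2]\!]$ ($\oplus$ symmetric difference); $q_1\prec_q q_2$ iff $q_1\preceq_q q_2$ and not $q_2\preceq_q q_1$. A $\preceq^{\mathrm{cod}}$-repair for $(q,E)$ is a CQ $q'$ that fits $E$ such that there is no CQ $q''$ fitting $E$ with $q''\prec^{\mathrm{cod}}_q q'$ (candidate CQs use only relation symbols occurring in the input). *)

(* Defs.v *)
From Stdlib Require Import List Arith Bool.
Import ListNotations.

(* Values: a countable domain closed under pairing, so that the direct
   product of instances has values <a,b> = VPair a b. *)
Inductive val : Type :=
| VBase : nat -> val
| VPair : val -> val -> val.

Definition fact : Type := (nat * list val)%type.
Definition instance : Type := list fact.
Definition dexample : Type := (instance * list val)%type.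

Definition fact_over (S : list nat) (ar : nat -> nat) (f : fact) : Prop :=
  In (fst f) S /\ length (snd f) = ar (fst f).

Definition adom (I : instance) : list val := flat_map snd I.

Definition dex_wf (S : list nat) (ar : nat -> nat) (k : nat) (e : dexample) : Prop :=
  (forall f, In f (fst e) -> fact_over S ar f) /\
  length (snd e) = k /\
  (forall v, In v (snd e) -> In v (adom (fst e))).

Record cq : Type := CQ { ans : list nat ; atoms : list (nat * list nat) }.

Definition cq_over (S : list nat) (ar : nat -> nat) (k : nat) (q : cq) : Prop :=
  length (ans q) = k /\
  (forall at_, In at_ (atoms q) -> In (fst at_) S /\ length (snd at_) = ar (fst at_)) /\
  (forall x, In x (ans q) -> exists at_, In at_ (atoms q) /\ In x (snd at_)).

Definition answers (q : cq) (I : instance) (a : list val) : Prop :=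
  exists h : nat -> val,
    (forall at_, In at_ (atoms q) -> In (fst at_, map h (snd at_)) I) /\
    map h (ans q) = a.

Definition sem (q : cq) (e : dexample) : Prop := answers q (fst e) (snd e).

Definition fits (q : cq) (Ep Em : list dexample) : Prop :=
  (forall e, In e Ep -> sem q e) /\ (forall e, In e Em -> ~ sem q e).

Definition symdiff (P Q : dexample -> Prop) (e : dexample) : Prop :=
  (P e /\ ~ Q e) \/ (~ P e /\ Q e).

Definition cod_le (q q1 q2 : cq) : Prop :=
  forall e, symdiff (sem q) (sem q1) e -> symdiff (sem q) (sem q2) e.

Definition cod_lt (q q1 q2 : cq) : Prop := cod_le q q1 q2 /\ ~ cod_le q q2 q1.

Definition cod_repair (S : list nat) (ar : nat -> nat) (k : nat)
    (q : cq) (Ep Em : list dexample) (q' : cq) : Prop :=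
  cq_over S ar k q' /\ fits q' Ep Em /\
  ~ (exists q'', cq_over S ar k q'' /\ fits q'' Ep Em /\ cod_lt q q'' q').

Definition inst_prod (I J : instance) : instance :=
  flat_map (fun f =>
    flat_map (fun g =>
      if andb (Nat.eqb (fst f) (fst g)) (Nat.eqb (length (snd f)) (length (snd g)))
      then [(fst f, map (fun p => VPair (fst p) (snd p)) (combine (snd f) (snd g)))]
      else []) J) I.

Definition dex_prod (e1 e2 : dexample) : dexample :=
  (inst_prod (fst e1) (fst e2),
   map (fun p => VPair (fst p) (snd p)) (combine (snd e1) (snd e2))).

Definition hatEm (Ep Em : list dexample) : list dexample :=
  match Ep with
  | [] => Em
  | _ => map (fun e => fold_left dex_prod Ep e) Em
  end.

(* Main.v *)
Require Import Defs.
From Stdlib Require Import List Arith Lia Classical.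
Import ListNotations.

Definition VP (p : val * val) : val := VPair (fst p) (snd p).

Lemma map_pair_combine (A : Type) (f g : A -> val) (l : list A) :
  map (fun x => VPair (f x) (g x)) l = map VP (combine (map f l) (map g l)).
Proof. induction l; simpl; f_equal; auto. Qed.

Lemma prod_pres q e1 e2 : sem q e1 -> sem q e2 -> sem q (dex_prod e1 e2).
Proof.
  intros [h1 [A1 B1]] [h2 [A2 B2]].
  exists (fun x => VPair (h1 x) (h2 x)). split.
  - intros at_ Hat. specialize (A1 _ Hat). specialize (A2 _ Hat).
    simpl. unfold inst_prod. apply in_flat_map. eexists; split; [exact A1|].
    apply in_flat_map. eexists; split; [exact A2|]. simpl.
    rewrite Nat.eqb_refl, !length_map, Nat.eqb_refl. simpl. left.
    f_equal. symmetry. apply (map_pair_combine _ h1 h2).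
  - simpl. rewrite map_pair_combine, B1, B2. reflexivity.
Qed.

Lemma fold_pres q Ep e : (forall e', In e' Ep -> sem q e') -> sem q e ->
  sem q (fold_left dex_prod Ep e).
Proof.
  revert e; induction Ep as [|d Ep IH]; intros e H He; simpl; auto.
  apply IH; [intros; apply H; simpl; auto|]. apply prod_pres; auto. apply H; simpl; auto.
Qed.

Definition pr1 (v : val) : val := match v with VPair a _ => a | _ => v end.

Lemma map_fst_combine (a b : list val) : length a = length b ->
  map pr1 (map VP (combine a b)) = a.
Proof.
  revert b; induction a as [|x a IH]; intros [|y b] H; simpl in *; try discriminate; auto.
  f_equal. apply IH. lia.
Qed.

Lemma proj_step q e1 e2 : length (snd e1) = length (snd e2) ->
  sem q (dex_prod e1 e2) -> sem q e1.
Proof.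
  intros L [h [A B]]. exists (fun x => pr1 (h x)). split.
  - intros at_ Hat. specialize (A _ Hat). simpl in A. unfold inst_prod in A.
    apply in_flat_map in A. destruct A as [f [Hf A]].
    apply in_flat_map in A. destruct A as [g [Hg A]].
    destruct (Nat.eqb (fst f) (fst g) && Nat.eqb (length (snd f)) (length (snd g)))%bool eqn:E;
      [|inversion A].
    apply andb_prop in E. destruct E as [_ E]. apply Nat.eqb_eq in E.
    destruct A as [A|[]]. injection A; intros A1 A2.
    rewrite <- map_map. fold VP in A1. rewrite <- A1, map_fst_combine by exact E.
    destruct f; simpl in *; subst; exact Hf.
  - rewrite <- map_map, B. simpl. fold VP. apply map_fst_combine. auto.
Qed.

Lemma fold_proj q k Ep e : (forall e', In e' Ep -> length (snd e') = k) ->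
  length (snd e) = k -> sem q (fold_left dex_prod Ep e) -> sem q e.
Proof.
  revert e; induction Ep as [|d Ep IH]; intros e H He S0; simpl in *; auto.
  apply IH in S0.
  - eapply proj_step; [|exact S0]. rewrite He, H; auto.
  - intros; apply H; auto.
  - simpl. rewrite length_map, length_combine, He, H; auto. lia.
Qed.

Definition canon (q : cq) : dexample :=
  (map (fun at_ => (fst at_, map VBase (snd at_))) (atoms q), map VBase (ans q)).

Lemma canon_sem q : sem q (canon q).
Proof.
  exists VBase. split; auto. intros at_ H. simpl.
  apply in_map_iff. exists at_; auto.
Qed.

Lemma canon_cont q1 q2 : sem q2 (canon q1) -> forall e, sem q1 e -> sem q2 e.
Proof.
  intros [h [A B]] e [g [Ag Bg]].
  set (g' := fun v => match v with VBase n => g n | _ => g 0 end).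
  exists (fun x => g' (h x)). split.
  - intros at_ Hat. specialize (A _ Hat). simpl in A. apply in_map_iff in A.
    destruct A as [at1 [E1 H1]]. specialize (Ag _ H1).
    rewrite <- map_map. injection E1; intros E2 E3. rewrite <- E2, <- E3, map_map.
    exact Ag.
  - rewrite <- map_map, B. simpl. rewrite map_map. exact Bg.
Qed.

Lemma hat1 r Ep Em : (forall e, In e Ep -> sem r e) ->
  (forall e, In e (hatEm Ep Em) -> ~ sem r e) -> forall e, In e Em -> ~ sem r e.
Proof.
  intros HP HH e He Hs. destruct Ep as [|d Ep]; simpl in HH.
  - exact (HH e He Hs).
  - apply (HH (fold_left dex_prod Ep (dex_prod e d))).
    + apply in_map_iff. eexists; split; [reflexivity|exact He].
    + apply (fold_pres r (d :: Ep) e); auto.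
Qed.

Lemma hat2 r k Ep Em : (forall e, In e Ep -> length (snd e) = k) ->
  (forall e, In e Em -> length (snd e) = k) ->
  (forall e, In e Em -> ~ sem r e) -> forall e, In e (hatEm Ep Em) -> ~ sem r e.
Proof.
  intros LP LM HM e He Hs. destruct Ep as [|d Ep]; simpl in He.
  - exact (HM e He Hs).
  - apply in_map_iff in He. destruct He as [e0 [E0 H0]]. subst e.
    apply (HM e0 H0). apply (fold_proj r k (d :: Ep) e0); auto.
Qed.

Record DQ := mkDQ { datoms : list (nat * list nat); dX : list nat; dY : list nat }.

Definition dsem (d : DQ) (I : instance) (a b : list val) : Prop :=
  exists h : nat -> val,
    (forall at_, In at_ (datoms d) -> In (fst at_, map h (snd at_)) I) /\
    map h (dX d) = a /\ map h (dY d) = b.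

Definition sub (v u w : nat) : nat := if Nat.eqb w v then u else w.

Definition substD (v u : nat) (d : DQ) : DQ :=
  mkDQ (map (fun at_ => (fst at_, map (sub v u) (snd at_))) (datoms d))
       (map (sub v u) (dX d)) (map (sub v u) (dY d)).

Definition stepD (i : nat) (d : DQ) : DQ := substD (nth i (dY d) 0) (nth i (dX d) 0) d.

Fixpoint iterD (j : nat) (d : DQ) : DQ :=
  match j with 0 => d | S j => stepD j (iterD j d) end.

Lemma iter_lenX j d : length (dX (iterD j d)) = length (dX d).
Proof. induction j; simpl; auto. rewrite length_map; auto. Qed.
Lemma iter_lenY j d : length (dY (iterD j d)) = length (dY d).
Proof. induction j; simpl; auto. rewrite length_map; auto. Qed.



Lemma step_sem d i I a b : i < length (dX d) -> i < length (dY d) ->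
  (dsem (stepD i d) I a b <-> dsem d I a b /\ nth_error a i = nth_error b i).
Proof.
  intros LX LY. unfold stepD.
  set (u := nth i (dX d) 0). set (v := nth i (dY d) 0).
  assert (Hu : nth_error (dX d) i = Some u) by (apply nth_error_nth'; auto).
  assert (Hv : nth_error (dY d) i = Some v) by (apply nth_error_nth'; auto).
  split.
  - intros [h [A [B C]]]. split.
    + exists (fun w => h (sub v u w)). split; [|split].
      * intros at_ Hat. specialize (A (fst at_, map (sub v u) (snd at_))).
        simpl in A. rewrite map_map in A. apply A. apply in_map_iff. eexists; split; eauto.
      * rewrite <- map_map. exact B.
      * rewrite <- map_map. exact C.
    + subst a b. simpl. rewrite !nth_error_map, Hu, Hv. simpl.
      unfold sub. rewrite Nat.eqb_refl. destruct (Nat.eqb u v) eqn:E; auto.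
  - intros [[h [A [B C]]] N].
    assert (Huv : h u = h v).
    { subst a b. rewrite !nth_error_map, Hu, Hv in N. simpl in N. injection N; auto. }
    assert (Hs : forall w, h (sub v u w) = h w).
    { intro w. unfold sub. destruct (Nat.eqb w v) eqn:E; auto.
      apply Nat.eqb_eq in E. subst; auto. }
    assert (Hm : forall l, map h (map (sub v u) l) = map h l).
    { intro l. rewrite map_map. apply map_ext. auto. }
    exists h. simpl. split; [|split].
    + intros at_ Hat. apply in_map_iff in Hat. destruct Hat as [at0 [E0 H0]].
      subst at_. simpl. rewrite Hm. apply A; auto.
    + rewrite Hm; auto.
    + rewrite Hm; auto.
Qed.

Lemma iter_sem d j I a b : j <= length (dX d) -> j <= length (dY d) ->
  (dsem (iterD j d) I a b <-> dsem d I a b /\ forall i, i < j -> nth_error a i = nth_error b i).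
Proof.
  induction j; intros LX LY; simpl.
  - split; [intros H; split; auto; intros; lia| tauto].
  - rewrite step_sem by (rewrite ?iter_lenX, ?iter_lenY; lia).
    rewrite IHj by lia. split.
    + intros [[H1 H2] H3]. split; auto. intros i Hi.
      destruct (Nat.eq_dec i j); subst; auto. apply H2; lia.
    + intros [H1 H2]. split; [split|]; auto.
Qed.

Definition ren (f : nat -> nat) (at_ : nat * list nat) := (fst at_, map f (snd at_)).
Definition f1 (n : nat) := 2 * n.
Definition f2 (n : nat) := 2 * n + 1.

Definition d0 (q1 q2 : cq) : DQ :=
  mkDQ (map (ren f1) (atoms q1) ++ map (ren f2) (atoms q2))
       (map f1 (ans q1)) (map f2 (ans q2)).

Lemma d0_sem q1 q2 I a b : dsem (d0 q1 q2) I a b <-> answers q1 I a /\ answers q2 I b.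
Proof.
  split.
  - intros [h [A [B C]]]. split.
    + exists (fun n => h (f1 n)). split.
      * intros at_ Hat. rewrite <- map_map. apply (A (ren f1 at_)). simpl.
        apply in_or_app. left. apply in_map; auto.
      * rewrite <- map_map; auto.
    + exists (fun n => h (f2 n)). split.
      * intros at_ Hat. rewrite <- map_map. apply (A (ren f2 at_)). simpl.
        apply in_or_app. right. apply in_map; auto.
      * rewrite <- map_map; auto.
  - intros [[h1 [A1 B1]] [h2 [A2 B2]]].
    set (h := fun w => if Nat.even w then h1 (Nat.div2 w) else h2 (Nat.div2 w)).
    assert (E1 : forall n, h (f1 n) = h1 n).
    { intro n. unfold h, f1. rewrite Nat.even_even, Nat.div2_double. auto. }
    assert (E2 : forall n, h (f2 n) = h2 n).
    { intro n. unfold h, f2. rewrite Nat.even_odd, Nat.div2_odd'. auto. }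
    exists h. simpl. split; [|split].
    + intros at_ Hat. apply in_app_or in Hat. destruct Hat as [Hat|Hat];
        apply in_map_iff in Hat; destruct Hat as [at0 [E0 H0]]; subst at_; simpl;
        rewrite map_map.
      * erewrite map_ext by apply E1. apply A1; auto.
      * erewrite map_ext by apply E2. apply A2; auto.
    + rewrite map_map. erewrite map_ext by apply E1. auto.
    + rewrite map_map. erewrite map_ext by apply E2. auto.
Qed.

Definition aok S ar (d : DQ) := forall at_, In at_ (datoms d) ->
  In (fst at_) S /\ length (snd at_) = ar (fst at_).
Definition safe (d : DQ) :=
  (forall x, In x (dX d) -> exists at_, In at_ (datoms d) /\ In x (snd at_)) /\
  (forall x, In x (dY d) -> exists at_, In at_ (datoms d) /\ In x (snd at_)).

Lemma substD_aok S ar v u d : aok S ar d -> aok S ar (substD v u d).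
Proof.
  intros H at_ Hat. simpl in Hat. apply in_map_iff in Hat.
  destruct Hat as [at0 [E0 H0]]; subst at_; simpl. rewrite length_map. apply H; auto.
Qed.

Lemma substD_safe v u d : safe d -> safe (substD v u d).
Proof.
  assert (G : forall l, (forall x, In x l -> exists at_, In at_ (datoms d) /\ In x (snd at_)) ->
     forall x, In x (map (sub v u) l) -> exists at_, In at_ (datoms (substD v u d)) /\ In x (snd at_)).
  { intros l H x Hx. apply in_map_iff in Hx. destruct Hx as [x0 [E0 H0]]. subst x.
    destruct (H x0 H0) as [at0 [A0 B0]].
    exists (fst at0, map (sub v u) (snd at0)). split.
    - simpl. apply in_map_iff. eexists; split; eauto.
    - simpl. apply in_map; auto. }
  intros [HX HY]. split; simpl; apply G; auto.
Qed.

Lemma iter_aok S ar j d : aok S ar d -> aok S ar (iterD j d).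
Proof. induction j; simpl; auto. intros; apply substD_aok; auto. Qed.
Lemma iter_safe j d : safe d -> safe (iterD j d).
Proof. induction j; simpl; auto. intros; apply substD_safe; auto. Qed.

Lemma conj_exists S ar k q1 q2 : cq_over S ar k q1 -> cq_over S ar k q2 ->
  exists r, cq_over S ar k r /\ forall e, sem r e <-> sem q1 e /\ sem q2 e.
Proof.
  intros [L1 [At1 Sf1]] [L2 [At2 Sf2]].
  set (d := iterD k (d0 q1 q2)).
  assert (LX : length (dX (d0 q1 q2)) = k) by (simpl; rewrite length_map; auto).
  assert (LY : length (dY (d0 q1 q2)) = k) by (simpl; rewrite length_map; auto).
  exists (CQ (dX d) (datoms d)). split.
  - split; [|split]; simpl.
    + unfold d. rewrite iter_lenX; auto.
    + apply iter_aok. intros at_ Hat. simpl in Hat. apply in_app_or in Hat.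
      destruct Hat as [Hat|Hat]; apply in_map_iff in Hat; destruct Hat as [at0 [E0 H0]];
        subst at_; unfold ren; simpl; rewrite length_map; auto.
    + apply iter_safe. split; simpl.
      * intros x Hx. apply in_map_iff in Hx. destruct Hx as [x0 [E0 H0]]. subst x.
        destruct (Sf1 x0 H0) as [at0 [A0 B0]]. exists (ren f1 at0). split.
        -- apply in_or_app. left. apply in_map; auto.
        -- apply in_map; auto.
      * intros x Hx. apply in_map_iff in Hx. destruct Hx as [x0 [E0 H0]]. subst x.
        destruct (Sf2 x0 H0) as [at0 [A0 B0]]. exists (ren f2 at0). split.
        -- apply in_or_app. right. apply in_map; auto.
        -- apply in_map; auto.
  - intros [I a]. unfold sem. simpl. split.
    + intros [h [A B]].
      assert (Hd : dsem d I a (map h (dY d))) by (exists h; auto).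
      unfold d in Hd. rewrite iter_sem in Hd by lia. destruct Hd as [Hd N].
      rewrite d0_sem in Hd. destruct Hd as [H1 H2].
      assert (a = map h (dY d)).
      { apply nth_error_ext. intro n. destruct (Nat.lt_ge_cases n k).
        - apply N; auto.
        - rewrite !(proj2 (nth_error_None _ _)); auto.
          + rewrite ?length_map; unfold d; rewrite ?iter_lenY, ?iter_lenX; lia.
          + simpl in B. rewrite <- B, length_map. unfold d. rewrite iter_lenX. lia. }
      rewrite H at 2. auto.
    + intros [H1 H2].
      assert (Hd : dsem d I a a).
      { unfold d. rewrite iter_sem by lia. split; auto. apply d0_sem; auto. }
      destruct Hd as [h [A [B _]]]. exists h; auto.
Qed.

Theorem proposition20 (S : list nat) (ar : nat -> nat) (k : nat)
    (q : cq) (Ep Em : list dexample) :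
  cq_over S ar k q ->
  (forall e, In e Ep -> dex_wf S ar k e) ->
  (forall e, In e Em -> dex_wf S ar k e) ->
  forall q' : cq,
    cod_repair S ar k q Ep Em q' <->
    ((cod_repair S ar k q Ep [] q' /\ fits q' [] Em) \/
     (cod_repair S ar k q [] (hatEm Ep Em) q' /\ fits q' Ep [])).
Proof.
  intros Hq HP HM q'.
  assert (LP : forall e, In e Ep -> length (snd e) = k) by (intros e He; apply (HP e He)).
  assert (LM : forall e, In e Em -> length (snd e) = k) by (intros e He; apply (HM e He)).
  split.
  - intros [Ov [[F1 F2] NB]].
    destruct (classic (forall e, sem q' e -> sem q e)) as [Sub|NSub].
    + right. split; [|split; [exact F1| intros e []]].
      split; [exact Ov|split].
      * split; [intros e []|]. apply hat2 with k; auto.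
      * intros [q3 [Ov3 [[_ F3] [Le3 NLe3]]]].
        assert (P3 : forall e, In e Ep -> sem q3 e).
        { intros e He. apply NNPP. intro Hn.
          assert (Hs : symdiff (sem q) (sem q3) e) by (left; split; auto; apply Sub; apply F1; auto).
          apply Le3 in Hs. destruct Hs as [[_ X]|[X _]]; apply X; auto. }
        apply NB. exists q3. split; auto. split; [|split; auto].
        split; auto. apply hat1 with Ep; auto.
    + left. split; [|split; [intros e []|exact F2]].
      split; [exact Ov|split; [split; [exact F1|intros e []]|]].
      intros [q2 [Ov2 [[F21 _] [Le2 NLe2]]]].
      apply not_all_ex_not in NSub. destruct NSub as [t Ht].
      apply imply_to_and in Ht. destruct Ht as [Ht1 Ht2].
      destruct (classic (sem q' (canon q2))) as [C|C].
      * apply NB. exists q2. split; auto. split; [|split; auto]. split; auto.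
        intros e He Hs. apply (F2 e He). apply (canon_cont q2 q'); auto.
      * assert (CQ2 : sem q (canon q2)).
        { apply NNPP; intro Hn.
          assert (Hs : symdiff (sem q) (sem q2) (canon q2)) by (right; split; auto; apply canon_sem).
          apply Le2 in Hs. destruct Hs as [[X _]|[_ X]]; auto. }
        destruct (conj_exists S ar k q q' Hq Ov) as [r [Ovr Hr]].
        apply NB. exists r. split; auto. split.
        -- split.
           ++ intros e He. apply Hr. split; [apply (canon_cont q2 q); auto|apply F1; auto].
           ++ intros e He Hs. apply Hr in Hs. apply (F2 e He). tauto.
        -- split.
           ++ intros e [[X Y]|[X Y]].
              ** left. split; auto. intro Z. apply Y, Hr; auto.
              ** apply Hr in Y; tauto.
           ++ intro Le. assert (Hs : symdiff (sem q) (sem q') t) by (right; auto).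
              apply Le in Hs. destruct Hs as [[X _]|[_ Y]]; [tauto|]. apply Hr in Y; tauto.
  - intros [[[Ov [[F1 _] NB]] [_ F2]] | [[Ov [[_ F2] NB]] [F1 _]]].
    + split; [exact Ov|split; [split; auto|]].
      intros [q2 [O2 [[G1 G2] L]]]. apply NB. exists q2. split; [exact O2|split; [split; [exact G1|intros e []]|exact L]].
    + split; [exact Ov|split; [split; [auto| apply hat1 with Ep; auto]|]].
      intros [q2 [O2 [[G1 G2] L]]]. apply NB. exists q2. split; auto. split; auto.
      split; [intros e []|]. apply hat2 with k; auto.
Qed.
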